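(* Fix a finite alphabet $\mathcal{X}\subset\mathbb{C}$ and consider the following communication model (a coherent-processing receiver with feedback-adapted displacement and on/off photon detection). A message $M_s$, uniformly distributed on $\{1,\dots,e^{NR}\}$, is encoded into a codeword $(X_1,\dots,X_N)\in\mathcal{X}^N$ satisfying the mean-photon-number constraint $\mathbb{E}[|X_i|^2]=\mathcal{E}$ for every $i$. In the $i$-th symbol period the receiver applies a complex control (displacement) signal $l_i=l_i(Y_1^{i-1})\in\mathbb{C}$, held constant over the symbol period and allowed to be an arbitrary function of the previous outputs $Y_1^{i-1}=(Y_1,\dots,Y_{i-1})$, and then observes the binary output $Y_i\in\{0,1\}$ (whether or not any photon arrives in the symbol period) with $$\Pr(Y_i=0\mid X_i,Y_1^{i-1})=e^{-|X_i+l_i(Y_1^{i-1})|^2},\qquad \Pr(Y_i=1\mid X_i,Y_1^{i-1})=1-e^{-|X_i+l_i(Y_1^{i-1})|^2},$$ conditionally independent of $(X_j)_{j\neq i}$. The decoder outputs an estimate $\hat M_s(Y_1^N)$. Let $C_{\sf coherent}(\mathcal{E})$ (in nats per channel use) be the supremum of rates $R$ for which there exist encoders, control policies and decoders with $\Pr(M_s\neq \hat M_s(Y_1^N))\to 0$ as $N\to\infty$. Then, as $\mathcal{E}\to 0$, $$\frac{C_{\sf coherent}(\mathcal{E})}{\mathcal{E}}\le \log\frac{1}{\mathcal{E}}-\log\log\frac{1}{\mathcal{E}}+O(1).$$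
   Context: $\log$ denotes the natural logarithm. $O(1)$ denotes a function of $\mathcal{E}$ that stays bounded as $\mathcal{E}\to 0$. Physically, $X_i$ is the complex amplitude of the coherent state $|X_i\rangle$ sent in the $i$-th channel use over a lossless optical channel (loss subsumed into $\mathcal{E}$), the receiver mixes it with a local coherent signal of amplitude $l_i$ so that the detected field has amplitude $X_i+l_i$, and an ideal photon counter produces Poisson-distributed counts with mean $|X_i+l_i|^2$; $Y_i$ records whether the count is zero or not. *)

(* Defs.v *)
From Stdlib Require Import Reals List.
From Coquelicot Require Import Coquelicot.
Import ListNotations.
Open Scope R_scope.

Definition cplx := (R * R)%type.
Definition cadd (z w : cplx) : cplx := (fst z + fst w, snd z + snd w).
Definition cabs2 (z : cplx) : R := fst z * fst z + snd z * snd z.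

Definition lsum {A : Type} (f : A -> R) (l : list A) : R :=
  fold_right Rplus 0 (map f l).

Fixpoint bseqs (n : nat) : list (list bool) :=
  match n with
  | O => [nil]
  | S k => flat_map (fun s => [s ++ [false]; s ++ [true]]) (bseqs k)
  end.

(* Channel law: Pr(Y=0 | x, l) = exp(-|x+l|^2), Pr(Y=1 | x, l) = 1 - exp(-|x+l|^2).
   (y = false means "no photon", y = true means "at least one photon"). *)
Definition chan (y : bool) (x l : cplx) : R :=
  if y then 1 - exp (- cabs2 (cadd x l)) else exp (- cabs2 (cadd x l)).

(* A code of block length N with K messages (messages 0..K-1):
   - enc m i : the i-th channel input (i = 0..N-1) for message m,
   - ctrl i h : the displacement l_i used in period i given the previous
                outputs h = (Y_1,...,Y_{i-1}) (in order),
   - dec ys  : the decoded message from the full output sequence. *)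
Record code := mkCode {
  c_enc  : nat -> nat -> cplx;
  c_ctrl : nat -> list bool -> cplx;
  c_dec  : list bool -> nat
}.

Fixpoint pathprob (x : nat -> cplx) (ctrl : nat -> list bool -> cplx)
    (hist ys : list bool) : R :=
  match ys with
  | nil => 1
  | y :: ys' =>
      chan y (x (length hist)) (ctrl (length hist) hist) *
      pathprob x ctrl (hist ++ [y]) ys'
  end.

Definition err_prob (N K : nat) (c : code) : R :=
  / INR K * lsum (fun m =>
     lsum (fun ys => pathprob (c_enc c m) (c_ctrl c) nil ys *
                     (if Nat.eqb (c_dec c ys) m then 0 else 1))
          (bseqs N))
     (seq 0 K).

Definition valid_code (alph : list cplx) (En : R) (N K : nat) (c : code) : Prop :=
  (forall m i, (m < K)%nat -> (i < N)%nat -> In (c_enc c m i) alph) /\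
  (forall i, (i < N)%nat ->
     / INR K * lsum (fun m => cabs2 (c_enc c m i)) (seq 0 K) = En).

(* Number of messages for rate Rt at blocklength N: K = ceil(exp(N Rt)). *)
Definition msg_count (Rt : R) (N K : nat) : Prop :=
  exp (INR N * Rt) <= INR K < exp (INR N * Rt) + 1.

Definition achievable (alph : list cplx) (En Rt : R) : Prop :=
  forall eps, 0 < eps -> exists N0 : nat, forall N : nat, (N0 <= N)%nat ->
    exists (K : nat) (c : code),
      msg_count Rt N K /\ valid_code alph En N K c /\ err_prob N K c <= eps.

Definition C_coherent (alph : list cplx) (En : R) : Rbar :=
  Lub_Rbar (achievable alph En).

(* Main.v *)
Require Import Defs.
From Stdlib Require Import Reals List Lra Lia.
From Coquelicot Require Import Coquelicot.
Import ListNotations.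
Open Scope R_scope.

Fixpoint allsum (n : nat) (f : list bool -> R) : R :=
  match n with
  | O => f nil
  | S k => allsum k (fun s => f (false :: s)) + allsum k (fun s => f (true :: s))
  end.

Lemma allsum_ext n : forall f g, (forall s, f s = g s) -> allsum n f = allsum n g.
Proof.
  induction n as [|n IH]; intros f g H; simpl; [apply H|].
  rewrite (IH (fun s => f (false :: s)) (fun s => g (false :: s))) by (intros; apply H).
  rewrite (IH (fun s => f (true :: s)) (fun s => g (true :: s))) by (intros; apply H). reflexivity.
Qed.

Lemma allsum_le n : forall f g, (forall s, f s <= g s) -> allsum n f <= allsum n g.
Proof.
  induction n as [|n IH]; intros f g H; simpl; [apply H|].
  apply Rplus_le_compat; apply IH; intros; apply H.
Qed.

Lemma allsum_plus n : forall f g, allsum n (fun s => f s + g s) = allsum n f + allsum n g.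
Proof.
  induction n as [|n IH]; intros f g; simpl; [reflexivity|].
  rewrite (IH (fun s => f (false :: s))), (IH (fun s => f (true :: s))). ring.
Qed.

Lemma allsum_scal n : forall c f, allsum n (fun s => c * f s) = c * allsum n f.
Proof.
  induction n as [|n IH]; intros c f; simpl; [reflexivity|].
  rewrite (IH c (fun s => f (false :: s))), (IH c (fun s => f (true :: s))). ring.
Qed.

Lemma allsum_snoc n : forall f,
  allsum n (fun s => f (s ++ [false]) + f (s ++ [true])) = allsum (S n) f.
Proof.
  induction n as [|n IH]; intros f; [reflexivity|].
  change (allsum n (fun s => f (false :: s ++ [false]) + f (false :: s ++ [true]))
        + allsum n (fun s => f (true :: s ++ [false]) + f (true :: s ++ [true]))
        = allsum (S (S n)) f).
  rewrite (IH (fun s => f (false :: s))).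
  rewrite (IH (fun s => f (true :: s))).
  reflexivity.
Qed.

Lemma lsum_cons {A} (f : A -> R) a l : lsum f (a :: l) = f a + lsum f l.
Proof. reflexivity. Qed.

Lemma lsum_nil {A} (f : A -> R) : lsum f nil = 0.
Proof. reflexivity. Qed.

Lemma lsum_flat2 (f : list bool -> R) (g h : list bool -> list bool) L :
  lsum f (flat_map (fun s => [g s; h s]) L) = lsum (fun s => f (g s) + f (h s)) L.
Proof.
  induction L as [|x L IH]; [reflexivity|].
  simpl flat_map. change (f (g x) + (f (h x) + lsum f (flat_map (fun s => [g s; h s]) L))
    = f (g x) + f (h x) + lsum (fun s => f (g s) + f (h s)) L).
  rewrite IH. ring.
Qed.

Lemma lsum_ext {A} (f g : A -> R) l : (forall a, f a = g a) -> lsum f l = lsum g l.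
Proof. intros H; induction l; [reflexivity|]. rewrite !lsum_cons, IHl, H. reflexivity. Qed.

Lemma lsum_bseqs n : forall f, lsum f (bseqs n) = allsum n f.
Proof.
  induction n as [|n IH]; intros f.
  - simpl. unfold lsum. simpl. ring.
  - simpl bseqs. rewrite lsum_flat2, IH. apply allsum_snoc.
Qed.

Lemma lsum_plus {A} (f g : A -> R) l : lsum (fun a => f a + g a) l = lsum f l + lsum g l.
Proof. induction l; [unfold lsum; simpl; ring|]. rewrite !lsum_cons, IHl. ring. Qed.

Lemma lsum_scal {A} c (f : A -> R) l : lsum (fun a => c * f a) l = c * lsum f l.
Proof. induction l; [unfold lsum; simpl; ring|]. rewrite !lsum_cons, IHl. ring. Qed.

Lemma lsum_le {A} (f g : A -> R) l : (forall a, In a l -> f a <= g a) -> lsum f l <= lsum g l.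
Proof.
  induction l; intros H; [unfold lsum; simpl; lra|]. rewrite !lsum_cons.
  apply Rplus_le_compat; [apply H; left; auto| apply IHl; intros; apply H; right; auto].
Qed.

Lemma allsum_zero n : forall f, (forall s, f s = 0) -> allsum n f = 0.
Proof. induction n; intros f H; simpl; [apply H|]. rewrite !IHn by (intros; apply H). ring. Qed.

Lemma lsum_zero {A} (f : A -> R) l : (forall a, f a = 0) -> lsum f l = 0.
Proof. intros H; induction l; [reflexivity|]. rewrite lsum_cons, IHl, H. ring. Qed.

Lemma lsum_allsum {A} n (F : A -> list bool -> R) l :
  lsum (fun a => allsum n (F a)) l = allsum n (fun s => lsum (fun a => F a s) l).
Proof.
  induction l as [|a l IH].
  - symmetry; apply allsum_zero; reflexivity.
  - rewrite lsum_cons, IH. rewrite <- allsum_plus. apply allsum_ext. intros; reflexivity.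
Qed.

Lemma lsum_swap {A B} (F : A -> B -> R) l1 l2 :
  lsum (fun a => lsum (fun b => F a b) l2) l1 = lsum (fun b => lsum (fun a => F a b) l1) l2.
Proof.
  induction l1 as [|a l IH].
  - symmetry; apply lsum_zero; reflexivity.
  - rewrite lsum_cons, IH, <- lsum_plus. apply lsum_ext. intros; reflexivity.
Qed.

Lemma lsum_const {A} c (l : list A) : lsum (fun _ => c) l = INR (length l) * c.
Proof. induction l; [unfold lsum; simpl; ring|]. rewrite lsum_cons, IHl. simpl length. rewrite S_INR. ring. Qed.

Lemma lsum_ind_le (v K : nat) :
  lsum (fun m => if Nat.eqb v m then 1 else 0) (seq 0 K) <= 1.
Proof.
  assert (H : forall st, lsum (fun m => if Nat.eqb v m then 1 else 0) (seq st K) <= 1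
     /\ ((v < st)%nat -> lsum (fun m => if Nat.eqb v m then 1 else 0) (seq st K) = 0)).
  { induction K; intros st.
    - split; [unfold lsum; simpl; lra| reflexivity].
    - simpl seq. rewrite lsum_cons. destruct (IHK (S st)) as [H1 H2].
      destruct (Nat.eqb v st) eqn:E.
      + apply Nat.eqb_eq in E. subst. split; [rewrite H2 by lia; lra| lia].
      + apply Nat.eqb_neq in E. split.
        * lra.
        * intros; rewrite H2 by lia; ring. }
  apply H.
Qed.
Definition rch (dl : R) (y : bool) (l : cplx) : R :=
  if y then 1 - (1 - dl) * exp (- cabs2 l) else (1 - dl) * exp (- cabs2 l).

Fixpoint qprob (dl : R) (ctrl : nat -> list bool -> cplx) (hist ys : list bool) : R :=
  match ys with
  | nil => 1
  | y :: ys' => rch dl y (ctrl (length hist) hist) * qprob dl ctrl (hist ++ [y]) ys'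
  end.

Definition T (p q : R) : R := p * ln (p / q).

Lemma cabs2_ge0 z : 0 <= cabs2 z.
Proof. unfold cabs2. nra. Qed.

Lemma exp_neg_le1 v : 0 <= v -> exp (- v) <= 1.
Proof. intros. rewrite <- exp_0. destruct (Req_dec v 0); [subst; rewrite Ropp_0; lra|].
  left; apply exp_increasing; lra. Qed.

Lemma chan_nonneg y x l : 0 <= chan y x l.
Proof. unfold chan. pose proof (exp_pos (- cabs2 (cadd x l))).
  pose proof (exp_neg_le1 _ (cabs2_ge0 (cadd x l))). destruct y; lra. Qed.

Lemma rch_pos dl y l : 0 < dl < 1 -> 0 < rch dl y l.
Proof. intros. unfold rch. pose proof (exp_pos (- cabs2 l)).
  pose proof (exp_neg_le1 _ (cabs2_ge0 l)). destruct y; nra. Qed.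

Lemma pathprob_nonneg x ctrl ys : forall h, 0 <= pathprob x ctrl h ys.
Proof. induction ys; intros h; simpl; [lra|]. apply Rmult_le_pos; [apply chan_nonneg|apply IHys]. Qed.

Lemma qprob_pos dl ctrl ys : 0 < dl < 1 -> forall h, 0 < qprob dl ctrl h ys.
Proof. intros Hd; induction ys; intros h; simpl; [lra|]. apply Rmult_lt_0_compat; [apply rch_pos; auto|apply IHys]. Qed.

Lemma pathprob_sum x ctrl n : forall h, allsum n (pathprob x ctrl h) = 1.
Proof.
  induction n; intros h; simpl; [reflexivity|].
  rewrite (allsum_scal n _ (pathprob x ctrl (h ++ [false]))).
  rewrite (allsum_scal n _ (pathprob x ctrl (h ++ [true]))).
  rewrite !IHn. unfold chan. ring.
Qed.

Lemma qprob_sum dl ctrl n : forall h, allsum n (qprob dl ctrl h) = 1.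
Proof.
  induction n; intros h; simpl; [reflexivity|].
  rewrite (allsum_scal n _ (qprob dl ctrl (h ++ [false]))).
  rewrite (allsum_scal n _ (qprob dl ctrl (h ++ [true]))).
  rewrite !IHn. unfold rch. ring.
Qed.

Lemma T_zero q : T 0 q = 0.
Proof. unfold T; ring. Qed.

Lemma T_mult p p' q q' : 0 <= p -> 0 <= p' -> 0 < q -> 0 < q' ->
  T (p * p') (q * q') = p' * T p q + p * T p' q'.
Proof.
  intros. unfold T.
  destruct (Req_dec p 0); [subst; ring|]. destruct (Req_dec p' 0); [subst; ring|].
  replace (p * p' / (q * q')) with ((p / q) * (p' / q')) by (field; lra).
  rewrite ln_mult by (apply Rdiv_lt_0_compat; lra). ring.
Qed.

Definition dletter (dl : R) (x l : cplx) : R :=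
  T (chan false x l) (rch dl false l) + T (chan true x l) (rch dl true l).

Lemma chain (dl A B : R) (x : nat -> cplx) ctrl n : 0 < dl < 1 ->
  forall h, (forall i, (length h <= i < length h + n)%nat -> forall l,
     dletter dl (x i) l <= A + B * cabs2 (x i)) ->
  allsum n (fun s => T (pathprob x ctrl h s) (qprob dl ctrl h s))
   <= lsum (fun i => A + B * cabs2 (x i)) (seq (length h) n).
Proof.
  intros Hd. induction n; intros h Hl.
  - simpl. unfold T. replace (1/1) with 1 by field. rewrite ln_1. unfold lsum; simpl; lra.
  - simpl allsum. simpl seq. rewrite lsum_cons.
    set (l := ctrl (length h) h).
    assert (Hy : forall y, allsum n (fun s => T (chan y (x (length h)) l * pathprob x ctrl (h ++ [y]) s)
                                      (rch dl y l * qprob dl ctrl (h ++ [y]) s))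
              <= T (chan y (x (length h)) l) (rch dl y l) +
                 chan y (x (length h)) l * lsum (fun i => A + B * cabs2 (x i)) (seq (S (length h)) n)).
    { intros y.
      rewrite (allsum_ext n _ (fun s => pathprob x ctrl (h ++ [y]) s * T (chan y (x (length h)) l) (rch dl y l)
           + chan y (x (length h)) l * T (pathprob x ctrl (h ++ [y]) s) (qprob dl ctrl (h ++ [y]) s))).
      2:{ intros s; apply T_mult; auto using chan_nonneg, pathprob_nonneg, rch_pos, qprob_pos. }
      rewrite allsum_plus, allsum_scal.
      rewrite (allsum_ext n (fun s => pathprob x ctrl (h ++ [y]) s * _) (fun s => T (chan y (x (length h)) l) (rch dl y l) * pathprob x ctrl (h ++ [y]) s)) by (intros; ring).
      rewrite allsum_scal, pathprob_sum.
      apply Rplus_le_compat; [lra|]. apply Rmult_le_compat_l; [apply chan_nonneg|].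
      replace (S (length h)) with (length (h ++ [y])) by (rewrite length_app; simpl; lia).
      apply IHn. rewrite length_app; simpl. intros i Hi; apply Hl; lia. }
    pose proof (Hy false) as H0. pose proof (Hy true) as H1. simpl in H0, H1.
    pose proof (Hl (length h) ltac:(lia) l) as Hd0. unfold dletter in Hd0.
    unfold chan, rch in *.
    set (S0 := lsum (fun i => A + B * cabs2 (x i)) (seq (S (length h)) n)) in *.
    set (e := exp (- cabs2 (cadd (x (length h)) l))) in *.
    assert (e * S0 + (1 - e) * S0 = S0) by ring. lra.
Qed.

Lemma F2 y : 0 < y -> ln y <= y - 1.
Proof. intros. pose proof (exp_ineq1_le (ln y)). rewrite exp_ln in H0 by lra. lra. Qed.

Lemma expm_inv v : exp (- v) = / exp v.
Proof. apply exp_Ropp. Qed.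

Lemma F3 v : 0 <= v -> v * exp (- v) <= 1.
Proof. intros. rewrite expm_inv. pose proof (exp_ineq1_le v). pose proof (exp_pos v).
  apply (Rmult_le_reg_r (exp v)); auto. rewrite Rmult_assoc, Rinv_l by lra. lra. Qed.

Lemma F4 v : 1 - exp (- v) <= v.
Proof. pose proof (exp_ineq1_le (- v)). lra. Qed.

Lemma F5 a u : 0 < a -> a <= u -> 1 - exp (- u) <= u - u * a / (4 + 2 * a).
Proof.
  intros Ha Hu. set (w := exp (- (u/2))).
  assert (Hwe : exp (- u) = w * w). { unfold w. rewrite <- exp_plus. f_equal. field. }
  assert (Hw0 : 0 < w) by apply exp_pos.
  assert (Hw1 : 1 - w <= u / 2) by apply F4.
  assert (Hw2 : w * (2 + a) <= 2).
  { unfold w. rewrite expm_inv. pose proof (exp_ineq1_le (u/2)). pose proof (exp_pos (u/2)).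
    apply (Rmult_le_reg_r (exp (u/2))); auto.
    replace (/ exp (u / 2) * (2 + a) * exp (u / 2)) with (2 + a) by (field; lra). lra. }
  rewrite Hwe.
  assert (E1 : 1 - w * w = (1 - w) * (1 + w)) by ring. rewrite E1.
  assert (E2 : u - u * a / (4 + 2 * a) = (u / 2) * (1 + 2 / (2 + a))) by (field; lra).
  rewrite E2.
  assert (w <= 2 / (2 + a)).
  { apply (Rmult_le_reg_r (2 + a)); [lra|]. unfold Rdiv. rewrite Rmult_assoc, Rinv_l by lra. lra. }
  assert (w <= 1) by nra.
  apply Rmult_le_compat; lra.
Qed.

Lemma F6 d : 0 < d <= 1/2 -> - ln (1 - d) <= 2 * d.
Proof.
  intros. rewrite <- ln_Rinv by lra. pose proof (F2 (/ (1 - d))).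
  assert (0 < / (1 - d)) by (apply Rinv_0_lt_compat; lra).
  assert (/ (1 - d) - 1 <= 2 * d).
  { apply (Rmult_le_reg_r (1 - d)); [lra|]. rewrite Rmult_minus_distr_r, Rinv_l by lra. nra. }
  specialize (H0 H1). lra.
Qed.

Lemma Tle p q : 0 <= p <= 1 -> 0 < q -> T p q <= p * (- ln q).
Proof.
  intros Hp Hq. unfold T. destruct (Req_dec p 0); [subst; lra|].
  unfold Rdiv. rewrite ln_mult by (try apply Rinv_0_lt_compat; lra). rewrite ln_Rinv by lra.
  assert (ln p <= 0). { rewrite <- ln_1. apply ln_le; lra. }
  nra.
Qed.

Definition th a := a / (4 * (4 + 2 * a)).
Definition kap a := 1 - a / (8 + 4 * a).
Definition tau a := th a * th a * a / (th a + 1).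
Definition C2 a := ln ((1 + tau a) / tau a).
Definition C3 a := (1 + C2 a) / a + 2.

Lemma letter dl a x l : 0 < dl <= 1/2 -> 0 < a -> (cabs2 x = 0 \/ a <= cabs2 x) ->
  dletter dl x l <= 2 * dl + (C3 a + kap a * ln (/ dl)) * cabs2 x.
Proof.
  intros Hd Ha Hx.
  assert (HL : 0 <= ln (/ dl)).
  { rewrite <- ln_1. apply ln_le; [lra|]. rewrite <- Rinv_1. apply Rinv_le_contravar; lra. }
  assert (Hth : 0 < th a) by (unfold th; apply Rdiv_lt_0_compat; lra).
  assert (Htau : 0 < tau a) by (unfold tau; apply Rdiv_lt_0_compat; [|lra]; apply Rmult_lt_0_compat; [apply Rmult_lt_0_compat|]; lra).
  assert (HC2 : 0 <= C2 a).
  { unfold C2. rewrite <- ln_1. apply ln_le; [lra|].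
    apply (Rmult_le_reg_r (tau a)); auto. unfold Rdiv. rewrite Rmult_assoc, Rinv_l by lra. lra. }
  destruct x as [x1 x2], l as [l1 l2].
  unfold dletter, chan, rch, cadd, cabs2 in *; simpl in *.
  set (u := x1 * x1 + x2 * x2) in *.
  set (s := (x1 + l1) * (x1 + l1) + (x2 + l2) * (x2 + l2)).
  set (t := l1 * l1 + l2 * l2).
  assert (Hu0 : 0 <= u) by (unfold u; pose proof (Rle_0_sqr x1); pose proof (Rle_0_sqr x2); unfold Rsqr in *; lra).
  assert (Hs0 : 0 <= s) by (unfold s; pose proof (Rle_0_sqr (x1+l1)); pose proof (Rle_0_sqr (x2+l2)); unfold Rsqr in *; lra).
  assert (Ht0 : 0 <= t) by (unfold t; pose proof (Rle_0_sqr l1); pose proof (Rle_0_sqr l2); unfold Rsqr in *; lra).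
  set (E := exp (- s)). set (Et := exp (- t)).
  assert (HE0 : 0 < E) by apply exp_pos. assert (HE1 : E <= 1) by (apply exp_neg_le1; auto).
  assert (HEt0 : 0 < Et) by apply exp_pos. assert (HEt1 : Et <= 1) by (apply exp_neg_le1; auto).
  assert (HT0 : T E ((1 - dl) * Et) = E * (t - s) + E * (- ln (1 - dl))).
  { unfold T. unfold Rdiv. rewrite ln_mult by (try apply Rinv_0_lt_compat; nra).
    rewrite ln_Rinv by nra. rewrite ln_mult by lra. unfold E, Et. rewrite !ln_exp. ring. }
  rewrite HT0.
  pose proof (F6 dl Hd) as H6.
  assert (Hr1 : dl <= 1 - (1 - dl) * Et) by nra.
  assert (Hr1' : 1 - (1 - dl) * Et <= 1) by nra.
  assert (HlnR : 0 <= - ln (1 - (1 - dl) * Et)).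
  { assert (ln (1 - (1 - dl) * Et) <= 0). { rewrite <- ln_1. apply ln_le; lra. } lra. }
  destruct Hx as [Hx|Hx].
  -
    assert (x1 = 0 /\ x2 = 0) as [-> ->] by (unfold u in Hx; nra).
    assert (Hst : s = t) by (unfold s, t; ring).
    assert (HEE : E = Et) by (unfold E, Et; rewrite Hst; reflexivity).
    assert (T (1 - E) (1 - (1 - dl) * Et) <= 0).
    { unfold T. destruct (Req_dec (1 - E) 0) as [Z|Z]; [rewrite Z; lra|].
      assert (Hq : 0 < (1 - E) / (1 - (1 - dl) * Et)) by (apply Rdiv_lt_0_compat; lra).
      pose proof (F2 _ Hq).
      assert ((1 - E) / (1 - (1 - dl) * Et) <= 1).
      { apply (Rmult_le_reg_r (1 - (1 - dl) * Et)); [lra|]. unfold Rdiv.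
        rewrite Rmult_assoc, Rinv_l by lra. nra. }
      nra. }
    rewrite Hst. replace (t - t) with 0 by ring.
    assert (Hu : u = 0) by (unfold u; ring). rewrite Hu.
    assert (ln (1 - dl) <= 0) by (rewrite <- ln_1; apply ln_le; lra).
    assert (E * - ln (1 - dl) <= 1 * (2 * dl)) by (apply Rmult_le_compat; lra).
    lra.
  -
    assert (Hts : t - s <= s + 2 * u) by (unfold t, s, u; pose proof (Rle_0_sqr (x1+l1+x1)); pose proof (Rle_0_sqr (x2+l2+x2)); unfold Rsqr in *; nra).
    assert (HsE : s * E <= 1) by (apply F3; auto).
    assert (HA : E * (t - s) <= 1 + 2 * u) by nra.
    assert (HB : T (1 - E) (1 - (1 - dl) * Et) <= C2 a + kap a * u * ln (/ dl)).
    { eapply Rle_trans; [apply Tle; lra|].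
      destruct (Rle_lt_dec (tau a) t) as [Ht|Ht].
      + assert (Et <= 1 / (1 + tau a)).
        { assert (Hx1 : Et * exp t = 1) by (unfold Et; rewrite <- exp_plus; replace (- t + t) with 0 by ring; apply exp_0).
          pose proof (exp_ineq1_le t).
          assert (Et * (1 + tau a) <= 1) by nra.
          apply (Rmult_le_reg_r (1 + tau a)); [lra|]. unfold Rdiv. rewrite Rmult_assoc, Rinv_l by lra. lra. }
        assert (Hr : tau a / (1 + tau a) <= 1 - (1 - dl) * Et).
        { assert (1 - 1 / (1 + tau a) = tau a / (1 + tau a)) by (field; lra). nra. }
        assert (- ln (1 - (1 - dl) * Et) <= C2 a).
        { unfold C2. rewrite <- ln_Rinv by lra. apply ln_le.
          - apply Rinv_0_lt_compat; lra.
          - replace ((1 + tau a) / tau a) with (/ (tau a / (1 + tau a))) by (field; lra).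
            apply Rinv_le_contravar; [apply Rdiv_lt_0_compat|]; lra. }
        assert (0 <= kap a * u * ln (/ dl)).
        { apply Rmult_le_pos; [apply Rmult_le_pos|]; auto. unfold kap.
          assert (a / (8 + 4 * a) <= 1) by (apply (Rmult_le_reg_r (8 + 4 * a)); [lra|];
             unfold Rdiv; rewrite Rmult_assoc, Rinv_l by lra; lra). lra. }
        nra.
      + assert (- ln (1 - (1 - dl) * Et) <= ln (/ dl)).
        { rewrite <- ln_Rinv by lra. apply ln_le. apply Rinv_0_lt_compat; lra.
          apply Rinv_le_contravar; lra. }
        assert (Hc : 1 - E <= kap a * u).
        { pose proof (F5 a u Ha Hx) as H5.
          assert (Hsu : s - u <= th a * u + th a * a).
          { assert (Hk : (1 + / th a) * tau a = th a * a) by (unfold tau; field; lra).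
            assert (s - u <= th a * u + (1 + / th a) * t).
            { apply (Rmult_le_reg_l (th a)); auto.
              replace (th a * (th a * u + (1 + / th a) * t)) with (th a * th a * u + (th a + 1) * t)
                by (field; lra).
              unfold s, u, t. pose proof (Rle_0_sqr (th a * x1 - l1)); pose proof (Rle_0_sqr (th a * x2 - l2)); unfold Rsqr in *. nra. }
            assert ((1 + / th a) * t <= (1 + / th a) * tau a).
            { apply Rmult_le_compat_l; [|lra]. pose proof (Rinv_0_lt_compat _ Hth). lra. }
            lra. }
          assert (exp (- u) - E <= th a * u + th a * a).
          { destruct (Rle_lt_dec s u) as [Hsu'|Hsu'].
            - assert (exp (- u) <= E).
              { unfold E. destruct (Req_dec s u) as [->|]; [lra|]. left; apply exp_increasing; lra. }
              nra.
            - assert (E = exp (- u) * exp (- (s - u))) by (unfold E; rewrite <- exp_plus; f_equal; ring).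
              pose proof (F4 (s - u)). pose proof (exp_neg_le1 u Hu0). pose proof (exp_pos (- u)).
              pose proof (exp_pos (- (s - u))).
              nra. }
          assert (Hk2 : kap a = 1 - a / (4 + 2 * a) + 2 * th a) by (unfold kap, th; field; lra).
          rewrite Hk2.
          assert (th a * a <= th a * u) by nra.
          assert (u * a / (4 + 2 * a) = u * (a / (4 + 2 * a))) by (field; lra).
          nra. }
        assert (0 <= 1 - E) by lra.
        nra. }
    assert (HC3 : 1 + C2 a <= (C3 a - 2) * u).
    { unfold C3. replace ((1 + C2 a) / a + 2 - 2) with ((1 + C2 a) / a) by ring.
      apply (Rmult_le_reg_r a); auto. unfold Rdiv.
      replace ((1 + C2 a) * / a * u * a) with ((1 + C2 a) * u) by (field; lra). nra. }
    assert (0 <= E * - ln (1 - dl)) by (apply Rmult_le_pos; [lra|]; pose proof (F6 dl Hd);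
       assert (ln (1 - dl) <= 0) by (rewrite <- ln_1; apply ln_le; lra); lra).
    assert (E * - ln (1 - dl) <= 2 * dl) by nra.
    nra.
Qed.

Lemma lsum_ext_in {A} (f g : A -> R) l : (forall a, In a l -> f a = g a) -> lsum f l = lsum g l.
Proof. intros H; induction l; [reflexivity|]. rewrite !lsum_cons, IHl.
  - rewrite H; [reflexivity|simpl; auto].
  - intros; apply H; simpl; auto. Qed.

Lemma gibbs p q w : 0 <= p -> 0 < q -> 0 < w -> p * ln w <= T p q + q * w - p.
Proof.
  intros Hp Hq Hw. unfold T. destruct (Req_dec p 0) as [->|Hp0]; [nra|].
  assert (Hy : 0 < w * q / p) by (apply Rdiv_lt_0_compat; nra).
  pose proof (F2 _ Hy) as H0.
  assert (H1 : ln (w * q / p) = ln w - ln (p / q)).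
  { unfold Rdiv. rewrite !ln_mult, !ln_Rinv; try lra; try nra; try (apply Rinv_0_lt_compat; lra). }
  assert (H2 : p * ln (w * q / p) <= p * (w * q / p - 1)) by (apply Rmult_le_compat_l; lra).
  replace (p * (w * q / p - 1)) with (q * w - p) in H2 by (field; lra). nra.
Qed.

Definition ind (c : code) (m : nat) (s : list bool) : R := if Nat.eqb (c_dec c s) m then 1 else 0.

Lemma per_message alph a En N K c m :
  0 < En <= 1/2 -> 0 < a -> (forall x, In x alph -> cabs2 x = 0 \/ a <= cabs2 x) ->
  (1 <= K)%nat -> valid_code alph En N K c -> (m < K)%nat ->
  ln (INR K) * allsum N (fun s => pathprob (c_enc c m) (c_ctrl c) nil s * ind c m s)
  <= lsum (fun i => 2 * En + (C3 a + kap a * ln (/ En)) * cabs2 (c_enc c m i)) (seq 0 N)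
     + INR K * allsum N (fun s => qprob En (c_ctrl c) nil s * ind c m s).
Proof.
  intros HE Ha Halph HK [Hin Hen] Hm.
  assert (HK0 : 1 <= INR K) by (apply (le_INR 1); auto).
  assert (Hd : 0 < En < 1) by lra.
  set (P := pathprob (c_enc c m) (c_ctrl c) nil).
  set (Q := qprob En (c_ctrl c) nil).
  set (w := fun s => if Nat.eqb (c_dec c s) m then INR K else 1).
  assert (H1 : allsum N (fun s => P s * ln (w s)) <=
               allsum N (fun s => T (P s) (Q s) + Q s * w s - P s)).
  { apply allsum_le. intros s. apply gibbs.
    - apply pathprob_nonneg.
    - apply qprob_pos; auto.
    - unfold w. destruct (Nat.eqb _ _); lra. }
  rewrite (allsum_ext N (fun s => P s * ln (w s)) (fun s => ln (INR K) * (P s * ind c m s))) in H1.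
  2:{ intros s. unfold w, ind. destruct (Nat.eqb _ _); [ring|rewrite ln_1; ring]. }
  rewrite allsum_scal in H1.
  assert (H2 : allsum N (fun s => T (P s) (Q s) + Q s * w s - P s) <=
               allsum N (fun s => T (P s) (Q s) + (Q s + INR K * (Q s * ind c m s)) - P s)).
  { apply allsum_le. intros s. unfold w, ind. pose proof (qprob_pos En (c_ctrl c) s Hd nil).
    fold Q in H. destruct (Nat.eqb _ _); nra. }
  rewrite (allsum_ext N (fun s => T (P s) (Q s) + (Q s + INR K * (Q s * ind c m s)) - P s)
     (fun s => T (P s) (Q s) + (Q s + (INR K * (Q s * ind c m s) + (-1) * P s)))) in H2 by (intros; ring).
  rewrite !allsum_plus, allsum_scal, (allsum_scal N (-1)) in H2.
  unfold P, Q in H2. rewrite pathprob_sum, qprob_sum in H2.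
  pose proof (chain En (2 * En) (C3 a + kap a * ln (/ En)) (c_enc c m) (c_ctrl c) N Hd nil) as Hc.
  simpl length in Hc.
  assert (Hc' : allsum N (fun s => T (pathprob (c_enc c m) (c_ctrl c) nil s) (qprob En (c_ctrl c) nil s))
      <= lsum (fun i => 2 * En + (C3 a + kap a * ln (/ En)) * cabs2 (c_enc c m i)) (seq 0 N)).
  { apply Hc. intros i Hi l. apply letter; auto. apply Halph, Hin; lia. }
  fold P Q in Hc', H2, H1. eapply Rle_trans; [exact H1|]. eapply Rle_trans; [exact H2|]. lra.
Qed.

Lemma code_bound alph a En N K c :
  0 < En <= 1/2 -> 0 < a -> (forall x, In x alph -> cabs2 x = 0 \/ a <= cabs2 x) ->
  (1 <= K)%nat -> valid_code alph En N K c ->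
  ln (INR K) * (1 - err_prob N K c)
  <= INR N * (2 * En + (C3 a + kap a * ln (/ En)) * En) + 1.
Proof.
  intros HE Ha Halph HK Hv.
  assert (HK0 : 1 <= INR K) by (apply (le_INR 1); auto).
  assert (Hd : 0 < En < 1) by lra.
  set (B := C3 a + kap a * ln (/ En)).
  set (S := fun m => allsum N (fun s => pathprob (c_enc c m) (c_ctrl c) nil s * ind c m s)).
  set (Q := qprob En (c_ctrl c) nil).
  assert (Hsum : lsum (fun m => ln (INR K) * S m) (seq 0 K) <=
     lsum (fun m => lsum (fun i => 2 * En + B * cabs2 (c_enc c m i)) (seq 0 N)
                    + INR K * allsum N (fun s => Q s * ind c m s)) (seq 0 K)).
  { apply lsum_le. intros m Hm. apply in_seq in Hm. unfold S, Q, B.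
    apply (per_message alph); auto; lia. }
  rewrite lsum_scal, lsum_plus, lsum_scal, lsum_swap in Hsum.
  assert (Hi : lsum (fun i => lsum (fun m => 2 * En + B * cabs2 (c_enc c m i)) (seq 0 K)) (seq 0 N)
     = INR N * (INR K * (2 * En + B * En))).
  { rewrite (lsum_ext_in _ (fun _ => INR K * (2 * En + B * En))).
    - rewrite lsum_const, length_seq. reflexivity.
    - intros i Hi. apply in_seq in Hi. rewrite lsum_plus, lsum_const, lsum_scal, length_seq.
      destruct Hv as [_ Hv]. specialize (Hv i ltac:(lia)).
      assert (lsum (fun m => cabs2 (c_enc c m i)) (seq 0 K) = INR K * En).
      { rewrite <- Hv. field. lra. }
      rewrite H. ring. }
  rewrite Hi in Hsum.
  assert (HQ : lsum (fun m => allsum N (fun s => Q s * ind c m s)) (seq 0 K) <= 1).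
  { rewrite lsum_allsum. unfold Q. rewrite <- (qprob_sum En (c_ctrl c) N nil).
    apply allsum_le. intros s.
    rewrite (lsum_scal (qprob En (c_ctrl c) [] s) (fun m => ind c m s)).
    pose proof (lsum_ind_le (c_dec c s) K). pose proof (qprob_pos En (c_ctrl c) s Hd nil).
    unfold ind. nra. }
  assert (Herr : err_prob N K c = 1 - / INR K * lsum S (seq 0 K)).
  { unfold err_prob.
    rewrite (lsum_ext _ (fun m => 1 - S m)).
    - rewrite (lsum_ext (fun m => 1 - S m) (fun m => 1 + (-1) * S m)) by (intros; ring).
      rewrite lsum_plus, lsum_const, lsum_scal, length_seq. field. lra.
    - intros m. rewrite lsum_bseqs. unfold S.
      pose proof (pathprob_sum (c_enc c m) (c_ctrl c) N nil) as Hp.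
      rewrite (allsum_ext N (fun s => pathprob (c_enc c m) (c_ctrl c) [] s * ind c m s)
        (fun s => pathprob (c_enc c m) (c_ctrl c) [] s + (-1) * (pathprob (c_enc c m) (c_ctrl c) [] s *
             (if Nat.eqb (c_dec c s) m then 0 else 1)))).
      + rewrite allsum_plus, allsum_scal. rewrite Hp. ring.
      + intros s. unfold ind. destruct (Nat.eqb _ _); ring. }
  rewrite Herr.
  replace (ln (INR K) * (1 - (1 - / INR K * lsum S (seq 0 K)))) with
    (/ INR K * (ln (INR K) * lsum S (seq 0 K))) by ring.
  assert (0 < / INR K) by (apply Rinv_0_lt_compat; lra).
  apply (Rmult_le_reg_l (INR K)); [lra|].
  rewrite <- Rmult_assoc, Rinv_r, Rmult_1_l by lra.
  nra.
Qed.

Lemma alph_min (alph : list cplx) :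
  exists a, 0 < a /\ forall x, In x alph -> cabs2 x = 0 \/ a <= cabs2 x.
Proof.
  induction alph as [|z l [a [Ha H]]].
  - exists 1. split; [lra|]. intros x [].
  - destruct (Req_dec (cabs2 z) 0) as [Z|Z].
    + exists a. split; auto. intros x [<-|Hx]; auto.
    + exists (Rmin a (cabs2 z)). pose proof (cabs2_ge0 z). split.
      * apply Rmin_pos; lra.
      * intros x [<-|Hx]. right; apply Rmin_r.
        destruct (H x Hx); [left; auto|right]. eapply Rle_trans; [apply Rmin_l|auto].
Qed.

Lemma rate_bound alph a En Rt :
  0 < En <= 1/2 -> 0 < a -> (forall x, In x alph -> cabs2 x = 0 \/ a <= cabs2 x) ->
  0 < 2 * En + (C3 a + kap a * ln (/ En)) * En ->
  achievable alph En Rt -> Rt <= 2 * En + (C3 a + kap a * ln (/ En)) * En.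
Proof.
  intros HE Ha Halph HU Hach.
  set (U := 2 * En + (C3 a + kap a * ln (/ En)) * En) in *.
  destruct (Rle_lt_dec Rt U) as [|Hlt]; [auto|exfalso].
  set (gap := Rt - U).
  assert (Hg : 0 < gap) by (unfold gap; lra).
  set (eps := Rmin (1/2) (gap / (2 * Rt))).
  assert (Heps : 0 < eps) by (apply Rmin_pos; [lra|apply Rdiv_lt_0_compat; lra]).
  assert (Heps1 : eps <= 1/2) by apply Rmin_l.
  assert (Heps2 : eps * Rt <= gap / 2).
  { assert (eps <= gap / (2 * Rt)) by apply Rmin_r.
    apply (Rmult_le_compat_r Rt) in H; [|lra].
    replace (gap / (2 * Rt) * Rt) with (gap / 2) in H by (field; lra). lra. }
  destruct (Hach eps Heps) as [N0 HN0].
  destruct (archimed_cor1 (gap / 2)) as [Nc [HNc HNc0]]; [lra|].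
  destruct (HN0 (N0 + Nc)%nat ltac:(lia)) as [K [c [Hmc [Hv Herr]]]].
  set (N := (N0 + Nc)%nat) in *.
  assert (HNpos : 0 < INR Nc) by (apply lt_0_INR; lia).
  assert (HNN : INR Nc <= INR N) by (apply le_INR; unfold N; lia).
  unfold msg_count in Hmc.
  assert (HK : (1 <= K)%nat).
  { destruct K; [|lia]. simpl in Hmc. pose proof (exp_pos (INR N * Rt)). lra. }
  pose proof (code_bound alph a En N K c HE Ha Halph HK Hv) as Hb. fold U in Hb.
  assert (HlnK : INR N * Rt <= ln (INR K)).
  { rewrite <- (ln_exp (INR N * Rt)). apply ln_le; [apply exp_pos|lra]. }
  assert (HNR : 0 <= INR N * Rt) by (apply Rmult_le_pos; [apply pos_INR|lra]).
  assert (H1 : INR N * Rt * (1 - eps) <= ln (INR K) * (1 - err_prob N K c)).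
  { apply Rmult_le_compat; lra. }
  assert (H2 : INR N * (Rt * (1 - eps)) <= INR N * U + 1) by lra.
  assert (H3 : INR N * (U + gap / 2) <= INR N * (Rt * (1 - eps))).
  { apply Rmult_le_compat_l; [apply pos_INR|]. unfold gap in *. lra. }
  assert (H4 : 1 < INR N * (gap / 2)).
  { apply (Rmult_lt_compat_l (INR Nc)) in HNc; auto. rewrite Rinv_r in HNc by lra.
    assert (INR Nc * (gap / 2) <= INR N * (gap / 2)) by (apply Rmult_le_compat_r; lra). lra. }
  lra.
Qed.

Theorem theorem1 (alph : list cplx) :
  exists (c E0 : R), 0 < E0 /\
    forall En : R, 0 < En < E0 ->
      Rbar_le (C_coherent alph En)
        (Finite (En * (ln (/ En) - ln (ln (/ En)) + c))).
Proof.
  destruct (alph_min alph) as [a [Ha Halph]].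
  set (al := a / (8 + 4 * a)).
  assert (Hal : 0 < al) by (unfold al; apply Rdiv_lt_0_compat; lra).
  assert (Hkap : kap a = 1 - al) by reflexivity.
  exists (2 + C3 a - ln al), (1/2). split; [lra|].
  intros En HE.
  assert (HE' : 0 < En <= 1/2) by lra.
  set (L := ln (/ En)).
  assert (HL : 0 < L).
  { unfold L. rewrite <- ln_1. apply ln_increasing; [lra|].
    apply (Rmult_lt_reg_l En); [lra|]. rewrite Rinv_r by lra. lra. }
  assert (HC2 : 0 <= C2 a).
  { unfold C2.
    assert (Hth : 0 < th a) by (unfold th; apply Rdiv_lt_0_compat; lra).
    assert (Htau : 0 < tau a) by (unfold tau; apply Rdiv_lt_0_compat; [|lra]; apply Rmult_lt_0_compat; [apply Rmult_lt_0_compat|]; lra).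
    rewrite <- ln_1. apply ln_le; [lra|].
    apply (Rmult_le_reg_r (tau a)); auto. unfold Rdiv. rewrite Rmult_assoc, Rinv_l by lra. lra. }
  assert (HC3 : 0 < C3 a).
  { unfold C3. assert (0 < (1 + C2 a) / a) by (apply Rdiv_lt_0_compat; lra). lra. }
  assert (Hk0 : 0 <= kap a).
  { rewrite Hkap. unfold al.
    assert (a / (8 + 4 * a) <= 1) by (apply (Rmult_le_reg_r (8 + 4 * a)); [lra|];
       unfold Rdiv; rewrite Rmult_assoc, Rinv_l by lra; lra). lra. }
  assert (HU : 0 < 2 * En + (C3 a + kap a * L) * En).
  { assert (0 <= kap a * L) by (apply Rmult_le_pos; lra). nra. }
  assert (Hfin : 2 * En + (C3 a + kap a * L) * En <= En * (L - ln L + (2 + C3 a - ln al))).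
  { assert (Hl : ln L + ln al <= al * L).
    { rewrite <- ln_mult by lra. pose proof (F2 (L * al)). assert (0 < L * al) by nra. nra. }
    rewrite Hkap. nra. }
  unfold C_coherent.
  destruct (Lub_Rbar_correct (achievable alph En)) as [_ Hlub].
  apply Hlub. intros Rt Hach. simpl.
  eapply Rle_trans; [|exact Hfin].
  apply (rate_bound alph a En Rt HE' Ha Halph HU Hach).
Qed.
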